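(* Let $D,n,m,r\ge1$. For $0\le i<D$ let $M_i\in\mathbb{F}[x]^{r\times r}$ and $N_i\in\mathbb{F}[y]^{r\times r}$ have entries of degree $<n$, and let $f_i\in\mathbb{F}[x]$, $g_i\in\mathbb{F}[y]$ have degree $\le m$. Let $\omega\in\mathbb{F}$ have multiplicative order $\ge (Dnm)^2$. Let $\beta_0,\dots,\beta_{r^2-1}\in\mathbb{F}$ be distinct and let $p_0,\dots,p_{r^2-1}$ be the corresponding Lagrange interpolation polynomials. Then for all but fewer than $(Dnmr)^2$ values of $\alpha\in\mathbb{F}$, $$\mathrm{span}\Big\{\prod_{i=0}^{D-1}M_i(f_i(x))\cdot\prod_{i=0}^{D-1}N_i(g_i(y))\Big\}_{x,y\in\mathbb{F}}\subseteq\mathrm{span}\Big\{\prod_{i=0}^{D-1}M_i\Big(\sum_{\ell=0}^{r^2-1}f_i(\omega^\ell\alpha)p_\ell(z)\Big)\cdot\prod_{i=0}^{D-1}N_i\Big(\sum_{\ell=0}^{r^2-1}g_i((\omega^\ell\alpha)^{Dnm})p_\ell(z)\Big)\Big\}_{z\in\mathbb{F}}.$$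
   Context: Products $\prod_{i=0}^{D-1}$ of matrices are taken in increasing order of $i$ from left to right. Given $s$ and distinct $\beta_0,\dots,\beta_{s-1}\in\mathbb{F}$, the Lagrange interpolation polynomials are the unique $p_\ell\in\mathbb{F}[t]$ of degree $<s$ with $p_\ell(\beta_i)=1$ if $i=\ell$ and $0$ otherwise, for $i,\ell\in\{0,\dots,s-1\}$. Spans are $\mathbb{F}$-linear spans in $\mathbb{F}^{r\times r}$. *)

(* Defs.v *)
From HB Require Import structures.
From mathcomp Require Import all_boot all_order all_algebra.
Set Implicit Arguments. Unset Strict Implicit. Unset Printing Implicit Defensive.
Import GRing.Theory.
Local Open Scope ring_scope.

Definition mxprod (F : fieldType) (r D : nat) (A : 'I_D -> 'M[F]_r) : 'M[F]_r :=
  \big[mulmx/1%:M]_(i < D) A i.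

Definition mx_eval (F : fieldType) (r : nat) (M : 'M[{poly F}]_r) (t : F) : 'M[F]_r :=
  map_mx (fun p => p.[t]) M.

Definition in_span (F : fieldType) (r : nat) (T : Type) (B : T -> 'M[F]_r)
    (A : 'M[F]_r) : Prop :=
  exists (k : nat) (zs : 'I_k -> T) (c : 'I_k -> F),
    A = \sum_(j < k) c j *: B (zs j).

Definition span_sub (F : fieldType) (r : nat) (T U : Type)
    (A : T -> 'M[F]_r) (B : U -> 'M[F]_r) : Prop :=
  forall X : 'M[F]_r, in_span A X -> in_span B X.

(* Main.v *)
Require Import Defs.
From HB Require Import structures.
From mathcomp Require Import all_boot all_order all_algebra.
From mathcomp Require Import zify perm.
From Stdlib Require Import Classical.
Import GRing.Theory.
Local Open Scope ring_scope.


Lemma roots_seq (F : fieldType) (q : {poly F}) : q != 0 ->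
  exists S : seq F, (size S < size q)%N /\ forall x, root q x -> x \in S.
Proof.
move: {2}(size q) (leqnn (size q)) => s; elim: s q => [|s IH] q hs hq.
  by move: hq; rewrite -size_poly_eq0; move: hs; rewrite leqn0 => ->.
case: (classic (exists x, root q x)) => [[x hx]|nx]; last first.
  exists [::]; split; first by rewrite lt0n size_poly_eq0.
  by move=> y hy; case: nx; exists y.
case/factor_theorem: hx => q1 Eq.
have hq1 : q1 != 0 by apply: contraNneq hq => E; rewrite Eq E mul0r.
have sz : size q = (size q1).+1.
  by rewrite Eq size_Mmonic ?monicXsubC // size_XsubC addn2.
have [S [hS1 hS2]] := IH q1 ltac:(by rewrite -ltnS -sz) hq1.
exists (x :: S); split; first by rewrite /= sz.
move=> y; rewrite Eq rootM => /orP [/hS2 hy|]; first by rewrite inE hy orbT.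
by rewrite root_XsubC => /eqP ->; rewrite inE eqxx.
Qed.

Lemma size_sum_leq (F : fieldType) (I : finType) (P : pred I) (G : I -> {poly F}) N :
  (forall i, (size (G i) <= N)%N) -> (size (\sum_(i | P i) G i)%R <= N)%N.
Proof.
move=> h; elim/big_ind: _ => //; first by rewrite size_poly0.
by move=> a b ha hb; rewrite (leq_trans (size_polyD _ _)) // geq_max ha hb.
Qed.

Lemma size_prod_ord (F : fieldType) d (G : 'I_d -> {poly F}) s :
  (forall i, (size (G i) <= s.+1)%N) -> (size (\prod_i G i)%R <= (d * s).+1)%N.
Proof.
elim: d G => [|d IH] G h; first by rewrite big_ord0 size_poly1.
rewrite big_ord_recr /= (leq_trans (size_polyMleq _ _)) //.
have := IH (fun i => G (widen_ord (leqnSn d) i)) (fun i => h _).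
have := h ord_max; move: (size _) (size _) => a b h1 h2; rewrite -subn1; lia.
Qed.

Lemma size_det_leq (F : fieldType) d (A : 'M[{poly F}]_d) s :
  (forall i j, (size (A i j) <= s.+1)%N) -> (size (\det A) <= (d * s).+1)%N.
Proof.
move=> h; rewrite /determinant; apply: size_sum_leq => sg.
case: (odd_perm sg); rewrite ?expr1 ?expr0 ?mulN1r ?mul1r ?size_polyN;
  exact: size_prod_ord.
Qed.

Set Implicit Arguments. Unset Strict Implicit.




Definition pmxprod (F : fieldType) r D (A : 'I_D -> 'M[{poly F}]_r) : 'M[{poly F}]_r :=
  \big[mulmx/1%:M]_(i < D) A i.

Lemma mx_eval_prod (F : fieldType) r D (A : 'I_D -> 'M[{poly F}]_r) t :
  mx_eval (pmxprod A) t = mxprod (fun i => mx_eval (A i) t).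
Proof.
rewrite /mx_eval /mxprod /pmxprod.
change (fun p : {poly F} => p.[t]) with (horner_eval t).
elim/big_rec2: _ => [|i X Y _ E]; first by rewrite map_scalar_mx rmorph1.
by rewrite map_mxM E.

Qed.

Lemma mx_eval_comp (F : fieldType) r (A : 'M[{poly F}]_r) (q : {poly F}) x :
  mx_eval A q.[x] = mx_eval (map_mx (fun a => a \Po q) A) x.
Proof. by apply/matrixP => i j; rewrite !mxE horner_comp. Qed.

Lemma size_pmxprod (F : fieldType) r D (A : 'I_D -> 'M[{poly F}]_r) s :
  (forall i a b, (size (A i a b) <= s.+1)%N) ->
  forall a b, (size (pmxprod A a b) <= (D * s).+1)%N.
Proof.
elim: D A => [|D IH] A h a b.
  by rewrite /pmxprod big_ord0 mxE; case: (a == b); rewrite ?mulr1n ?mulr0n ?size_poly1 ?size_poly0.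
rewrite /pmxprod big_ord_recl /= mxE; apply: size_sum_leq => k.
rewrite (leq_trans (size_polyMleq _ _)) //.
have := IH (fun i => A (lift ord0 i)) (fun i => h _) k b.
have := h ord0 a k; rewrite /pmxprod.
move: (size _) (size _) => x y h1 h2; rewrite -subn1; lia.
Qed.

Lemma mx_eval_coef (F : fieldType) r (A : 'M[{poly F}]_r) T t :
  (forall a b, (size (A a b) <= T)%N) ->
  mx_eval A t = \sum_(a < T) t ^+ a *: map_mx (fun q : {poly F} => q`_a) A.
Proof.
move=> h; apply/matrixP => i j; rewrite !mxE summxE (horner_coef_wide _ (h i j)).
by apply: eq_bigr => a _; rewrite !mxE mulrC.
Qed.


Lemma row_free_colmx (F : fieldType) d R (B : 'M[F]_(d, R)) (v : 'rV[F]_R) :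
  row_free B -> ~~ (v <= B)%MS -> row_free (col_mx B v).
Proof.
move=> hB hv.
have s1 : (B <= col_mx B v)%MS.
  have E : B = row_mx 1%:M 0 *m col_mx B v by rewrite mul_row_col mul1mx mul0mx addr0.
  by rewrite {1}E submxMl.
have : (B < col_mx B v)%MS by rewrite ltmxE s1 /= col_mx_sub negb_and hv orbT.
rewrite ltmxErank => /andP [_]; move/eqP: hB => ->.
by rewrite -row_leq_rank => h; apply: leq_trans h; rewrite addn1.
Qed.

Lemma echelon (F : fieldType) K R (E : 'M[F]_(K, R)) k : (k <= K)%N ->
  exists d (B : 'M[F]_(d, R)) (L : 'I_K -> 'rV[F]_d) (piv : 'I_d -> nat),
  [/\ row_free B, (forall j, piv j < k)%N, injective piv,
      (forall i : 'I_K, (i < k)%N -> row i E = L i *m B) &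
      (forall (i : 'I_K) j, (i <= piv j)%N -> L i 0 j = (i == piv j :> nat)%:R)].
Proof.
elim: k => [|k IH] hk.
  exists 0%N, 0, (fun _ => 0), (fun _ => 0%N); split.
  - by rewrite /row_free eqn_leq rank_leq_row.
  - by move=> [].
  - by move=> [].
  - by [].
  - by move=> ? [].
have [d [B [L [piv [hB hpiv hinj hrow hL]]]]] := IH (ltnW hk).
set i0 : 'I_K := Ordinal hk.
have [/submxP [u hu]|hv] := boolP (row i0 E <= B)%MS.
  exists d, B, (fun i => if val i == k then u else L i), piv; split => //.
  - by move=> j; apply: ltn_trans (hpiv j) _.
  - move=> i; rewrite ltnS leq_eqVlt => /orP [/eqP ei|ltik].
      have -> : i = i0 by apply: val_inj.
      by rewrite /= eqxx hu.
    by rewrite /= (ltn_eqF ltik) hrow.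
  - move=> i j hij; have := hpiv j; rewrite ltnNge => hn.
    case: eqP => ei; last exact: hL.
    by move: hn; rewrite -ei hij.
exists (d + 1)%N, (col_mx B (row i0 E)),
  (fun i => if (val i < k)%N then row_mx (L i) 0 else row_mx 0 1),
  (fun j => match split j with inl j1 => piv j1 | inr _ => k end); split.
- exact: row_free_colmx.
- by move=> j; case: splitP => [j1 _|j1 _]; [apply: ltn_trans (hpiv j1) _|].
- move=> j1 j2; case: splitP => [a1 e1|a1 e1]; case: splitP => [a2 e2|a2 e2].
  + by move/hinj => ea; apply: val_inj; rewrite /= e1 e2 ea.
  + by move=> ea; have := hpiv a1; rewrite ea ltnn.
  + by move=> ea; have := hpiv a2; rewrite -ea ltnn.
  + by move=> _; apply: val_inj; rewrite /= e1 e2; case: a1 {e1} => [[]] // ?; case: a2 {e2} => [[]].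
- move=> i; rewrite ltnS leq_eqVlt => /orP [/eqP ei|ltik].
    have -> : i = i0 by apply: val_inj.
    by rewrite /= ltnn mul_row_col mul0mx add0r mul1mx.
  by rewrite ltik mul_row_col mul0mx addr0 hrow.
- move=> i j; case: splitP => [j1 ej|j1 ej] hij.
  + have hlt : (i < k)%N by apply: leq_ltn_trans hij (hpiv j1).
    rewrite hlt.
    have -> : j = lshift 1 j1 by apply: val_inj.
    by rewrite row_mxEl hL.
  + have -> : j = rshift d j1 by apply: val_inj.
    case: ifP => hlt; rewrite row_mxEr mxE.
      by move: hlt => /= hlt; rewrite (ltn_eqF hlt).
    have ei : nat_of_ord i = k by move: hlt => /= hlt; apply/eqP; rewrite eqn_leq hij leqNgt hlt.
    by rewrite ei eqxx; case: j1 {ej} => [[]].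
Qed.


Lemma core (F : fieldType) K R Lr (E : 'M[F]_(K, R)) (w : F) :
  (0 < K)%N -> (R <= Lr)%N ->
  (forall a b : nat, (a < K)%N -> (b < K)%N -> w ^+ a = w ^+ b -> a = b) ->
  exists Phi : {poly F}, [/\ Phi != 0, (size Phi <= (R * K.-1).+1)%N &
    forall alpha, ~~ root Phi alpha ->
      (E <= (\matrix_(l < Lr, k < K) (w ^+ l * alpha) ^+ k) *m E)%MS].
Proof.
move=> hK hRL hw.
have [d [B [L [piv [hB hpiv hinj hrow hL]]]]] := echelon E (leqnn K).
have hdR : (d <= R)%N.
  by move: hB; rewrite -row_leq_rank => h; exact: leq_trans h (rank_leq_col B).
pose Ap : 'M[{poly F}]_d :=
  \matrix_(l, j) \sum_(i < K) ((w ^+ l) ^+ i * L i 0 j) *: 'X^i.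
pose Hp : 'M[{poly F}]_d :=
  \matrix_(l, j) \sum_(i < K) ((w ^+ l) ^+ i * L i 0 j) *: 'X^(i - piv j).
pose Dg : 'M[{poly F}]_d := diag_mx (\row_j ('X^(piv j) : {poly F})).
have eA : Ap = Hp *m Dg.
  apply/matrixP => l j; rewrite mul_mx_diag !mxE big_distrl /=.
  apply: eq_bigr => i _; rewrite -scalerAl -exprD.
  case: (leqP (piv j) i) => h; first by rewrite subnK.
  by rewrite hL ?(ltnW h) // (ltn_eqF h) mulr0 !scale0r.
exists (\det Ap); split.
- rewrite eA det_mulmx det_diag mulf_neq0 //; last first.
    by apply/prodf_neq0 => j _; rewrite mxE monic_neq0 // monicXn.
  apply/negP => /eqP h0.
  have : horner_eval 0 (\det Hp) = 0 by rewrite h0 horner_evalE horner0.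
  rewrite -det_map_mx.
  have -> : map_mx (horner_eval 0) Hp = Vandermonde d (\row_j w ^+ piv j).
    apply/matrixP => l j; rewrite !mxE horner_evalE horner_sum.
    rewrite (bigD1 (Ordinal (hpiv j))) //= big1.
      by rewrite hornerZ hornerXn subnn expr0 mulr1 hL // eqxx mulr1 addr0 exprAC.
    move=> i /eqP ne; rewrite hornerZ hornerXn.
    case: (ltngtP i (piv j)) => h.
    + by rewrite hL ?(ltnW h) // (ltn_eqF h) mulr0 mul0r.
    + by rewrite expr0n subn_eq0 leqNgt h mulr0.
    + by case: ne; apply: val_inj.
  rewrite det_Vandermonde => /eqP; apply/negP.
  apply/prodf_neq0 => i _; apply/prodf_neq0 => j hij; rewrite !mxE subr_eq0.
  apply/eqP => /hw h; have := h (hpiv j) (hpiv i).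
  by move/hinj => eji; move: hij; rewrite eji ltnn.
- apply: leq_trans (@size_det_leq F d Ap K.-1 _) _.
    move=> l j; rewrite mxE; apply: size_sum_leq => i.
    rewrite (leq_trans (size_scale_leq _ _)) // size_polyXn prednK //.
  by rewrite ltnS leq_mul2r hdR orbT.
move=> al hal.
pose Om : 'M[F]_(d, K) := \matrix_(l, k) (w ^+ l * al) ^+ k.
pose Lm : 'M[F]_(K, d) := \matrix_(i < K) L i.
have eE : E = Lm *m B by apply/row_matrixP => i; rewrite row_mul rowK hrow.
have eAa : map_mx (horner_eval al) Ap = Om *m Lm.
  apply/matrixP => l j; rewrite !mxE horner_evalE horner_sum; apply: eq_bigr => i _.
  by rewrite hornerZ hornerXn !mxE exprMn mulrAC.
have hU : Om *m Lm \in unitmx.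
  by rewrite -eAa unitmxE det_map_mx unitfE.
have sB : (B <= Om *m E)%MS.
  have -> : Om *m E = (Om *m Lm) *m B by rewrite eE mulmxA.
  by rewrite -{1}(mulKmx hU B) submxMl.
apply: submx_trans (_ : (E <= B)%MS) _; first by rewrite {1}eE submxMl.
apply: submx_trans sB _; apply/row_subP => l; rewrite row_mul.
have hl : (l < Lr)%N by apply: leq_trans (ltn_ord l) (leq_trans hdR hRL).
have -> : row l Om = row (Ordinal hl) (\matrix_(l < Lr, k < K) (w ^+ l * al) ^+ k).
  by apply/rowP => k; rewrite !mxE.
by rewrite -row_mul row_sub.
Qed.


Lemma sum_reindex (V : zmodType) T (G : nat -> V) :
  \sum_(k < T * T) G k = \sum_(a < T) \sum_(b < T) G (a + T * b)%N.
Proof.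
rewrite exchange_big /=.
suff h : forall S, \sum_(k < T * S) G k = \sum_(b < S) \sum_(a < T) G (a + T * b)%N.
  exact: h.
elim => [|S IH]; first by rewrite muln0 !big_ord0.
rewrite big_ord_recr /= -IH.
have -> : (T * S.+1 = T * S + T)%N by rewrite mulnS addnC.
rewrite big_split_ord /=; congr (_ + _); apply: eq_bigr => a _.
by rewrite addnC.
Qed.

Unset Implicit Arguments. Set Strict Implicit.


Theorem lemma3p7 (F : fieldType) (D n m r : nat)
  (hD : (1 <= D)%N) (hn : (1 <= n)%N) (hm : (1 <= m)%N) (hr : (1 <= r)%N)
  (M N : 'I_D -> 'M[{poly F}]_r)
  (hM : forall i a b, (size (M i a b) <= n)%N)
  (hN : forall i a b, (size (N i a b) <= n)%N)
  (f g : 'I_D -> {poly F})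
  (hf : forall i, (size (f i) <= m.+1)%N)
  (hg : forall i, (size (g i) <= m.+1)%N)
  (w : F) (hw0 : w != 0)
  (hword : forall k : nat, (0 < k)%N -> (k < (D * n * m) ^ 2)%N -> w ^+ k != 1)
  (beta : 'I_(r ^ 2) -> F) (hbeta : injective beta)
  (p : 'I_(r ^ 2) -> {poly F})
  (hpsize : forall l, (size (p l) <= r ^ 2)%N)
  (hpval : forall i l, (p l).[beta i] = (i == l)%:R) :
  exists S : seq F, (size S < (D * n * m * r) ^ 2)%N /\
    forall alpha : F, alpha \notin S ->
      span_sub
        (fun xy : F * F =>
           mxprod (fun i => mx_eval (M i) (f i).[xy.1]) *m
           mxprod (fun i => mx_eval (N i) (g i).[xy.2]))
        (fun z : F =>
           mxprod (fun i => mx_eval (M i)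
              (\sum_(l < r ^ 2) (f i).[w ^+ l * alpha] * (p l).[z])) *m
           mxprod (fun i => mx_eval (N i)
              (\sum_(l < r ^ 2) (g i).[(w ^+ l * alpha) ^+ (D * n * m)] * (p l).[z]))).
Proof.
set T := (D * n * m)%N.
have hT : (0 < T)%N by rewrite /T; nia.
pose K := (T * T)%N.
have hK : (0 < K)%N by rewrite /K muln_gt0 hT.
pose Mf i := map_mx (fun a => a \Po f i) (M i).
pose Ng i := map_mx (fun a => a \Po g i) (N i).
pose Pp := pmxprod Mf.
pose Qp := pmxprod Ng.
have szP : forall a b, (size (Pp a b) <= T)%N.
  move=> a b; apply: leq_trans (size_pmxprod (s := ((n.-1) * m)%N) _ a b) _.
    move=> i x y; rewrite mxE (leq_trans (size_comp_poly_leq _ _)) // ltnS.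
    apply: leq_mul; [move: (hM i x y) | move: (hf i)]; move: (size _) => u;
      rewrite -!subn1; lia.
  rewrite /T; nia.
have szQ : forall a b, (size (Qp a b) <= T)%N.
  move=> a b; apply: leq_trans (size_pmxprod (s := ((n.-1) * m)%N) _ a b) _.
    move=> i x y; rewrite mxE (leq_trans (size_comp_poly_leq _ _)) // ltnS.
    apply: leq_mul; [move: (hN i x y) | move: (hg i)]; move: (size _) => u;
      rewrite -!subn1; lia.
  rewrite /T; nia.
pose Pa (a : nat) := map_mx (fun q : {poly F} => q`_a) Pp.
pose Qb (b : nat) := map_mx (fun q : {poly F} => q`_b) Qp.
pose c (k : nat) := Pa (k %% T)%N *m Qb (k %/ T)%N.
have ec : forall a b : 'I_T, c (a + T * b)%N = Pa a *m Qb b.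
  move=> a b; rewrite /c [(a + _)%N]addnC [(T * b)%N]mulnC modnMDl divnMDl // (modn_small (ltn_ord a)).
  by rewrite (divn_small (ltn_ord a)) addn0.
have eP : forall t, mxprod (fun i => mx_eval (M i) (f i).[t]) = mx_eval Pp t.
  move=> t; rewrite mx_eval_prod; apply: eq_bigr => i _; exact: mx_eval_comp.
have eQ : forall t, mxprod (fun i => mx_eval (N i) (g i).[t]) = mx_eval Qp t.
  move=> t; rewrite mx_eval_prod; apply: eq_bigr => i _; exact: mx_eval_comp.
have eXY : forall x y, mx_eval Pp x *m mx_eval Qp y =
    \sum_(a < T) \sum_(b < T) (x ^+ a * y ^+ b) *: c (a + T * b)%N.
  move=> x y; rewrite (mx_eval_coef _ szP) (mx_eval_coef _ szQ) mulmx_suml.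
  apply: eq_bigr => a _; rewrite mulmx_sumr; apply: eq_bigr => b _.
  by rewrite ec -scalemxAl -scalemxAr scalerA.
have eC : forall t, mx_eval Pp t *m mx_eval Qp (t ^+ T) =
    \sum_(k < K) t ^+ k *: c k.
  move=> t; rewrite eXY /K (@sum_reindex _ T (fun k : nat => t ^+ k *: c k)); apply: eq_bigr => a _; apply: eq_bigr => b _.
  by rewrite -exprM -exprD.
pose E : 'M[F]_(K, r * r) := \matrix_(k < K) mxvec (c k).
have hRL : (r * r <= r ^ 2)%N by rewrite mulnn.
have hw : forall a b : nat, (a < K)%N -> (b < K)%N -> w ^+ a = w ^+ b -> a = b.
  have key : forall a b : nat, (a < b)%N -> (b < K)%N -> w ^+ a != w ^+ b.
    move=> a b hab hb; rewrite -(subnKC (ltnW hab)) exprD.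
    apply/negP => /eqP h.
    have h1 : w ^+ (b - a) = 1.
      by apply: (mulfI (expf_neq0 a hw0)); rewrite -h mulr1.
    have := hword (b - a)%N; rewrite subn_gt0 hab h1 eqxx => /(_ isT) h2.
    suff : false by []; apply: h2.
    by rewrite -/T; apply: leq_ltn_trans (leq_subr _ _) hb.
  move=> a b ha hb hab; case: (ltngtP a b) => // h.
    by move/negP: (key _ _ h hb); rewrite hab.
  by move/negP: (key _ _ h ha); rewrite hab.
have [Phi [hPhi0 hPhisz hPhi]] := core E hK hRL hw.
have [S [hS1 hS2]] := @roots_seq F Phi hPhi0.
exists S; split.
  have : (size S < (r * r * K.-1).+1)%N := leq_trans hS1 hPhisz.
  rewrite /K -!mulnn -subn1 => hs; have hT2 := hT; move: hs hT2; rewrite /T; move: (D * n * m)%N (size S) => x s; nia.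
move=> al hal X [k [zs [cs ->]]].
have hnr : ~~ root Phi al by apply: contra hal; exact: hS2.
have sub := hPhi al hnr.
have hcE : forall a b : 'I_T, (mxvec (c (a + T * b)%N) <= E)%MS.
  move=> a b.
  have hk : (a + T * b < K)%N.
    rewrite /K; have := ltn_ord a; have := ltn_ord b.
    move: (nat_of_ord a) (nat_of_ord b) => x y; nia.
  by rewrite -(rowK (fun k : 'I_K => mxvec (c k)) (Ordinal hk)) row_sub.
have hX : (mxvec (\sum_(j < k) cs j *: (mxprod (fun i => mx_eval (M i) (f i).[(zs j).1]) *m
           mxprod (fun i => mx_eval (N i) (g i).[(zs j).2]))) <= E)%MS.
  rewrite linear_sum; apply/summx_sub => j _; rewrite linearZ /= scalemx_sub //.
  rewrite eP eQ eXY linear_sum; apply/summx_sub => a _; rewrite linear_sum.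
  apply/summx_sub => b _; rewrite linearZ scalemx_sub //.
  exact: hcE.
have := submx_trans hX sub => /submxP [u hu].
have es : forall (t : 'I_(r ^ 2) -> F) l,
    \sum_(l' < r ^ 2) t l' * (p l').[beta l] = t l.
  move=> t l; rewrite (bigD1 l) //= hpval eqxx mulr1 big1 ?addr0 // => l' ne.
  by rewrite hpval eq_sym (negbTE ne) mulr0.
exists (r ^ 2)%N, beta, (fun l => u 0 l).
apply: (can_inj mxvecK); rewrite hu mulmx_sum_row linear_sum; apply: eq_bigr => l _.
rewrite linearZ /=; congr (_ *: _).
rewrite row_mul mulmx_sum_row.
have -> : mxprod (fun i => mx_eval (M i)
              (\sum_(l0 < r ^ 2) (f i).[w ^+ l0 * al] * (p l0).[beta l])) =
          mx_eval Pp (w ^+ l * al).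
  by rewrite -eP; apply: eq_bigr => i _; rewrite (es (fun l0 => (f i).[w ^+ l0 * al])).
have -> : mxprod (fun i => mx_eval (N i)
              (\sum_(l0 < r ^ 2) (g i).[(w ^+ l0 * al) ^+ T] * (p l0).[beta l])) =
          mx_eval Qp ((w ^+ l * al) ^+ T).
  by rewrite -eQ; apply: eq_bigr => i _; rewrite (es (fun l0 => (g i).[(w ^+ l0 * al) ^+ T])).
rewrite eC linear_sum; apply: eq_bigr => k0 _.
by rewrite rowK linearZ !mxE.
Qed.
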